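(* Let $q$ be a prime power, let $n\ge 1$ with $\gcd(n,q)=1$, and let $C_1$ and $C_2$ be cyclic codes of length $n$ over $\mathbb{F}_q$ with parameters $[n,k_1,d_1]_q$ and $[n,k_2,d_2]_q$, respectively, whose defining sets are taken with respect to the same primitive $n$-th root of unity. Then there exists a QUENTA code with parameters $$[[\,n,\; k_1-|Z(C_1^\perp)\cap Z(C_2)|,\; \min\{d_1,d_2\};\; n-k_2-|Z(C_1^\perp)\cap Z(C_2)|\,]]_q .$$
   Context: A linear $[n,k,d]_q$ code is a $k$-dimensional subspace of $\mathbb{F}_q^n$ with minimum Hamming distance $d$; $C^\perp$ denotes its Euclidean dual. For $\gcd(n,q)=1$, a cyclic code $C$ of length $n$ over $\mathbb{F}_q$ is identified with an ideal of $\mathbb{F}_q[x]/(x^n-1)$; fixing a primitive $n$-th root of unity $\alpha$ in an extension field of $\mathbb{F}_q$, the defining set of $C$ is $Z(C)=\{i\in\mathbb{Z}_n : c(\alpha^i)=0 \text{ for all } c(x)\in C\}$, and $\dim C=n-|Z(C)|$. A QUENTA code (entanglement-assisted quantum error-correcting code) with parameters $[[n,k,d;c]]_q$ is a $q$-ary entanglement-assisted quantum stabilizer code that encodes $k$ logical qudits into $n$ physical qudits using $c$ pairs of maximally entangled qudits pre-shared between sender and receiver, and has minimum distance $d$ (every error acting nontrivially on fewer than $d$ of the $n$ sender's qudits is detectable). *)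

(* Defs.v *)
From HB Require Import structures.
From mathcomp Require Import all_boot all_order all_algebra all_field.
Set Implicit Arguments. Unset Strict Implicit. Unset Printing Implicit Defensive.
Import GRing.Theory.
Local Open Scope ring_scope.

(* Linear codes of length n over F are represented (mxalgebra style) by a
   matrix whose row space is the code; membership is (v <= C)%MS and the
   dimension is \rank C. *)

Section Codes.
Variables (F : finFieldType) (n : nat).

Definition wt (v : 'rV[F]_n) : nat := #|[set i : 'I_n | v 0 i != 0]|.

Definition is_min_dist (C : 'M[F]_n) (d : nat) : Prop :=
  (exists2 v : 'rV[F]_n, (v <= C)%MS & (v != 0) && (wt v == d)) /\
  (forall v : 'rV[F]_n, (v <= C)%MS -> v != 0 -> (d <= wt v)%N).

Definition dualC (C : 'M[F]_n) : 'M[F]_n := kermx C^T.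

Definition cshift (v : 'rV[F]_n) : 'rV[F]_n := \row_(i < n) v 0 (ord_pred i).

Definition is_cyclic (C : 'M[F]_n) : Prop :=
  forall v : 'rV[F]_n, (v <= C)%MS -> (cshift v <= C)%MS.

Definition cw_eval (L : fieldExtType F) (v : 'rV[F]_n) (x : L) : L :=
  \sum_(j < n) (v 0 j)%:A * x ^+ j.

Definition defset (L : fieldExtType F) (alpha : L) (C : 'M[F]_n) : {set 'I_n} :=
  [set i : 'I_n | [forall v : 'rV[F]_n, (v <= C)%MS ==> (cw_eval v (alpha ^+ i) == 0)]].

(* symplectic matrix J = [0 I; -I 0]; (a|b) J (x|z)^T = a.z - b.x *)
Definition symJ : 'M[F]_(n + n) := block_mx 0 1%:M (- 1%:M) 0.

Definition sympl_dual (S : 'M[F]_(n + n)) : 'M[F]_(n + n) := kermx (symJ *m S^T).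

Definition swt (v : 'rV[F]_(n + n)) : nat :=
  #|[set i : 'I_n | (lsubmx v 0 i != 0) || (rsubmx v 0 i != 0)]|.

(* S (row space in F_q^{2n}) is the symplectic stabilizer data of a QUENTA code
   [[n,k,d;c]]_q : dim S = n - k + c, dim (S cap S^perp_s) = n - k - c, and every
   vector of S^perp_s outside S cap S^perp_s (a nondetectable error) has
   symplectic weight >= d. *)
Definition is_quenta (S : 'M[F]_(n + n)) (k d c : nat) : Prop :=
  [/\ (\rank S + k = n + c)%N,
      (\rank (S :&: sympl_dual S)%MS + k + c = n)%N &
      forall v : 'rV[F]_(n + n), (v <= sympl_dual S)%MS -> ~~ (v <= S)%MS ->
        (d <= swt v)%N].

End Codes.

(* Main.v *)
Require Import Defs.
From HB Require Import structures.
From mathcomp Require Import all_boot all_order all_algebra all_field.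
From mathcomp Require Import all_fingroup zify ring.
Set Implicit Arguments. Unset Strict Implicit. Unset Printing Implicit Defensive.
Import GRing.Theory.
Local Open Scope ring_scope.


Section LinAlg.
Variable K : fieldType.

Lemma rank_pair_eqmx m1 m2 m3 m4 n (X : 'M[K]_(m1, n)) (X' : 'M_(m2, n))
   (Y : 'M_(m3, n)) (Y' : 'M_(m4, n)) :
  (X :=: X')%MS -> (Y :=: Y')%MS -> \rank (X *m Y^T) = \rank (X' *m Y'^T).
Proof.
move=> hX hY; rewrite (eqmxMr _ hX) -mxrank_tr trmx_mul trmxK (eqmxMr _ hY).
by rewrite -[RHS]mxrank_tr trmx_mul trmxK.
Qed.

Lemma rank_cap_dual m1 m2 n (B : 'M[K]_(m1, n)) (A : 'M_(m2, n)) :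
  \rank (B :&: kermx A^T)%MS = (\rank B - \rank (B *m A^T))%N.
Proof. by rewrite -(mxrank_mul_ker B A^T) addKn. Qed.

Lemma sub_blockP n (X Y : 'M[K]_n) (v : 'rV_(n + n)) :
  (v <= block_mx X 0 0 Y)%MS = (lsubmx v <= X)%MS && (rsubmx v <= Y)%MS.
Proof.
apply/idP/andP.
  case/submxP=> D ->; rewrite -[D]hsubmxK mul_row_block !mulmx0 addr0 add0r.
  by rewrite row_mxKl row_mxKr !submxMl.
case=> /submxP[Dl hl] /submxP[Dr hr]; apply/submxP; exists (row_mx Dl Dr).
by rewrite mul_row_block !mulmx0 addr0 add0r -hl -hr hsubmxK.
Qed.

Lemma dualK n (C : 'M[K]_n) : (kermx (kermx C^T)^T :=: C)%MS.
Proof.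
have H : (C <= kermx (kermx C^T)^T)%MS.
  by rewrite sub_kermx -[C in C *m _]trmxK -trmx_mul mulmx_ker trmx0.
apply/eqmx_sym/eqmxP; case: (mxrank_leqif_eq H) => _ <-.
by rewrite mxrank_ker mxrank_tr mxrank_ker mxrank_tr subKn ?rank_leq_col.
Qed.

End LinAlg.


Section Coord.
Variables (K : fieldType) (n : nat).

Definition Pi (T : {set 'I_n}) : 'M[K]_n := diag_mx (\row_i (i \in T)%:R).

Lemma delta_sub_Pi (T : {set 'I_n}) i : i \in T -> ((delta_mx 0 i : 'rV[K]_n) <= Pi T)%MS.
Proof.
move=> iT; have := row_sub i (Pi T); rewrite row_diag_mx mxE iT scale1r //.
Qed.

Lemma rank_Pi (T : {set 'I_n}) : \rank (Pi T) = #|T|.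
Proof.
pose G : 'M[K]_(#|T|, n) := \matrix_k delta_mx 0 (enum_val k).
have GG : G *m G^T = 1%:M.
  apply/matrixP=> k l; rewrite !mxE (bigD1 (enum_val k)) //= big1 => [|j /negbTE jk].
    rewrite !mxE !eqxx /= mul1r addr0 (inj_eq enum_val_inj) eq_sym //.
  by rewrite !mxE jk andbF mul0r.
have fG : row_free G by apply/row_freeP; exists G^T.
have <- : \rank G = #|T| by move/eqnP: fG.
apply/eqmx_rank; apply/andP; split; apply/row_subP => i.
  rewrite /Pi (row_diag_mx (\row_i0 ((i0 \in T)%:R : K)) i) mxE.
  have [iT|iT] := boolP (i \in T); rewrite ?(negbTE iT) ?iT ?scale0r ?sub0mx // scale1r.
  by rewrite -(enum_rankK_in iT iT) /G -(rowK (fun k => delta_mx 0 (enum_val k)) (enum_rank_in iT i)) row_sub.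
by rewrite /G rowK delta_sub_Pi // enum_valP.
Qed.

Lemma Pi_id m (A : 'M[K]_(m, n)) (T : {set 'I_n}) :
  (forall r i, i \notin T -> A r i = 0) -> (A <= Pi T)%MS.
Proof.
move=> A0; have -> : A = A *m Pi T; last exact: submxMl.
apply/matrixP => r i; rewrite /Pi mul_mx_diag !mxE.
have [h|h] := boolP (i \in T).
  rewrite (_ : nat_of_bool _ = 1%N) ?mulr1 //; exact: (congr1 nat_of_bool h).
rewrite (_ : nat_of_bool _ = 0%N) ?mulr0 ?(A0 _ _ h) //; exact: (congr1 nat_of_bool (negbTE h)).
Qed.

End Coord.


Section Neg.
Variable n : nat.
Fact negI_subproof (i : 'I_n) : ((n - i) %% n < n)%N.
Proof. by case: n i => [|m] [k kl] //=; rewrite ltn_pmod. Qed.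
Definition negI (i : 'I_n) : 'I_n := Ordinal (negI_subproof i).
Local Open Scope nat_scope.

Lemma negIK : involutive negI.
Proof.
move=> [i il]; apply/val_inj => /=.
case: i il => [|i] il; first by rewrite subn0 modnn subn0 modnn.
rewrite (@modn_small (n - i.+1)); last by lia.
by rewrite modn_small; lia.
Qed.

Lemma negI_inj : injective negI. Proof. exact: inv_inj negIK. Qed.

Lemma dvd_negI (i j : 'I_n) : (n %| i + j) = (j == negI i).
Proof.
case: i j => [i il] [j jl]; rewrite -val_eqE /=.
case: i il => [|i] il.
  rewrite add0n subn0 modnn; case: j jl => [|j] jl; first by rewrite dvdn0.
  by rewrite /dvdn modn_small.
rewrite modn_small; last by lia.
apply/idP/eqP => [/dvdnP [k hk]|->]; last by rewrite subnKC ?dvdnn //; lia.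
have : k = 1%N by nia.
by move=> hk1; rewrite hk1 mul1n in hk; lia.
Qed.
End Neg.


Section DFT.
Variables (F : finFieldType) (n : nat) (L : fieldExtType F) (alpha : L).
Hypotheses (prim : n.-primitive_root alpha) (nz : (n%:R : L) != 0).

Definition DFTE : 'M[L]_n := \matrix_(j, i) alpha ^+ (j * i).
Definition DFTEb : 'M[L]_n := \matrix_(i, k) alpha ^+ (i * negI k).
Definition DFTP : 'M[L]_n := \matrix_(i, k) (k == negI i)%:R.
Definition DFTDg : 'M[L]_n := diag_mx (\row_i alpha ^+ i).

Lemma sum_pow t : \sum_(j < n) alpha ^+ (t * j) = if (n %| t)%N then n%:R else 0.
Proof.
under eq_bigr do rewrite exprM.
case: ifP => [dt|ndt].
  move: dt; rewrite (prim_order_dvd prim) => /eqP ->.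
  by under eq_bigr do rewrite expr1n; rewrite sumr_const card_ord.
have h1 : alpha ^+ t - 1 != 0 by rewrite subr_eq0 -(prim_order_dvd prim) ndt.
have : (alpha ^+ t) ^+ n - 1 = 0 by rewrite exprAC (prim_expr_order prim) expr1n subrr.
by rewrite subrX1 => /eqP; rewrite mulf_eq0 (negbTE h1) => /eqP.
Qed.

Lemma EEb : DFTE *m DFTEb = n%:R *: 1%:M.
Proof.
apply/matrixP=> j k; rewrite !mxE.
under eq_bigr => i _ do rewrite !mxE -exprD [(i * _)%N]mulnC -mulnDl.
rewrite sum_pow dvd_negI (inj_eq (@negI_inj n)) eq_sym.
by case: eqP => _; rewrite ?mulr1 ?mulr0.
Qed.

Lemma EbEbT : DFTEb *m DFTEb^T = n%:R *: DFTP.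
Proof.
apply/matrixP=> i k; rewrite !mxE.
under eq_bigr => j _ do rewrite !mxE -exprD -mulnDl.
rewrite (reindex_inj (@negI_inj n)).
under eq_bigr => j _ do rewrite negIK.

by rewrite sum_pow dvd_negI; case: eqP => _; rewrite ?mulr1 ?mulr0.
Qed.

Lemma PP : DFTP *m DFTP = 1%:M.
Proof.
apply/matrixP=> i k; rewrite !mxE (bigD1 (negI i)) //= big1 => [|j /negbTE ji].
  by rewrite !mxE eqxx mul1r addr0 negIK eq_sym.
by rewrite !mxE ji mul0r.
Qed.

Lemma E_unit : DFTE \in unitmx.
Proof.
have h : DFTE *m ((n%:R)^-1 *: DFTEb) = 1%:M.
  by rewrite -scalemxAr EEb scalerA mulVf // scale1r.
by case: (mulmx1_unit h).
Qed.

Lemma P_unit : DFTP \in unitmx.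
Proof. by case: (mulmx1_unit PP). Qed.

End DFT.


Section Cyc.
Variables (F : finFieldType) (n : nat) (L : fieldExtType F) (alpha : L).
Hypotheses (prim : n.-primitive_root alpha) (nz : (n%:R : L) != 0).

Local Notation toL A := (map_mx (in_alg L) A).
Local Notation E := (DFTE n alpha).
Local Notation Dg := (DFTDg n alpha).

Lemma evalE (v : 'rV[F]_n) (i : 'I_n) : cw_eval v (alpha ^+ i) = (toL v *m E) 0 i.
Proof.
rewrite /cw_eval !mxE; apply: eq_bigr => j _; rewrite !mxE -exprM mulnC //.
Qed.

Definition sp : 'S_n := perm (@ord_pred_inj n).
Definition Sh : 'M[F]_n := perm_mx (sp^-1)%g.

Lemma cshiftE (v : 'rV[F]_n) : cshift v = v *m Sh.
Proof.
by rewrite /Sh -col_permE; apply/rowP => i; rewrite !mxE permE.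
Qed.

Lemma spV j : (sp^-1)%g j = ordS j.
Proof. by apply: (@perm_inj _ sp); rewrite permKV permE ordSK. Qed.

Lemma ShE : toL Sh *m E = E *m Dg.
Proof.
rewrite map_perm_mx -row_permE; apply/matrixP => j i.
rewrite mul_mx_diag !mxE spV /= -exprD addnC -mulSn.
by rewrite -(prim_expr_mod prim) modnMml (prim_expr_mod prim).
Qed.

Lemma cyc_stab (C : 'M[F]_n) : is_cyclic C -> (C *m Sh <= C)%MS.
Proof.
move=> cC; apply/row_subP => r; rewrite row_mul -cshiftE; apply: cC; exact: row_sub.
Qed.

Lemma stabW (C : 'M[F]_n) : is_cyclic C -> (toL C *m E *m Dg <= toL C *m E)%MS.
Proof.
move=> cC; rewrite -mulmxA -ShE mulmxA -map_mxM submxMr // map_submx.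
exact: cyc_stab.
Qed.

Lemma kill m (W : 'M[L]_(m, n)) : (W *m Dg <= W)%MS -> forall w : 'rV_n, (w <= W)%MS ->
  forall s : seq 'I_n, (\row_j ((w 0 j * \prod_(k <- s) (alpha ^+ j - alpha ^+ k))%R) <= W)%MS.
Proof.
move=> stab w wW; elim => [|k s IH].
  rewrite (_ : \row_j _ = w) //.
  by apply/rowP => j; rewrite mxE big_nil mulr1.
set w' := \row_j _ in IH.
rewrite (_ : \row_j _ = w' *m Dg + (- alpha ^+ k) *: w').
  apply: addmx_sub; last exact: scalemx_sub.
  exact: submx_trans (submxMr Dg IH) stab.
apply/rowP => j; rewrite /DFTDg [in RHS]mxE mul_mx_diag !mxE big_cons.
ring.
Qed.


Lemma deltaW m (W : 'M[L]_(m, n)) (w : 'rV_n) i : (W *m Dg <= W)%MS ->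
  (w <= W)%MS -> w 0 i != 0 -> ((delta_mx 0 i : 'rV[L]_n) <= W)%MS.
Proof.
move=> stab wW wi.
set s := [seq k <- enum 'I_n | k != i].
have := kill stab wW s.
set c := w 0 i * \prod_(k <- s) (alpha ^+ i - alpha ^+ k).
have cnz : c != 0.
  rewrite mulf_neq0 // prodf_seq_neq0; apply/allP => k; rewrite mem_filter => /andP[ki _].
  rewrite /= subr_eq0 (eq_prim_root_expr prim) !modn_small //.
  by rewrite eq_sym.
rewrite (_ : \row_j _ = c *: delta_mx 0 i) => [h|].
  by rewrite -(scale1r (delta_mx 0 i)) -(mulVf cnz) -scalerA scalemx_sub.
apply/rowP => j; rewrite !mxE eqxx /=; have [->|ji] := eqVneq j i; first by rewrite mulr1.
rewrite mulr0; apply/eqP; rewrite mulf_eq0; apply/orP; right.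
rewrite (big_rem j) /=; last by rewrite mem_filter ji mem_enum.
by rewrite subrr mul0r.
Qed.

Lemma mainW (C : 'M[F]_n) : is_cyclic C ->
  (toL C *m E :=: Pi L (~: defset alpha C))%MS.
Proof.
move=> cC; apply/eqmxP/andP; split.
  apply: Pi_id => r i; rewrite in_setC negbK => iZ.
  have -> : (toL C *m E) r i = cw_eval (row r C) (alpha ^+ i).
    by rewrite evalE map_row -row_mul [RHS]mxE.
  move: iZ; rewrite inE => /forallP /(_ (row r C)); rewrite row_sub /=.
  by move/eqP.
apply/row_subP => i; rewrite /Pi row_diag_mx mxE.
have [iS|iS] := boolP (i \in ~: defset alpha C); last by rewrite scale0r sub0mx.
rewrite scale1r; move: iS; rewrite in_setC inE => /forallPn [v].
rewrite negb_imply => /andP[vC vnz].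
apply: (deltaW (w := toL v *m E)) => //.
- exact: stabW.
- by rewrite submxMr // map_submx.
- by rewrite -evalE.
Qed.


Lemma E_free : row_free E.
Proof. by rewrite row_free_unit (E_unit prim nz). Qed.

Lemma rank_cyc (C : 'M[F]_n) : is_cyclic C -> \rank C = #|~: defset alpha C|.
Proof.
move=> cC; rewrite -(mxrank_map (in_alg L) C) -(mxrankMfree _ E_free).
by rewrite (mainW cC) rank_Pi.
Qed.

Lemma mulRb (x y : bool) : x%:R * y%:R = (x && y)%:R :> L.
Proof. by case: x; case: y; rewrite ?mulr1 ?mulr0. Qed.

Lemma pair_cyc (C D : 'M[F]_n) : is_cyclic C -> is_cyclic D ->
  \rank (C *m D^T) = #|~: defset alpha C :&: @negI n @^-1: (~: defset alpha D)|.
Proof.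
move=> cC cD.
rewrite -(mxrank_map (in_alg L)) map_mxM -map_trmx.
have eX (X : 'M[F]_n) : (toL X :=: toL X *m E *m DFTEb n alpha)%MS.
  rewrite -mulmxA (EEb prim) -scalemxAr mulmx1; exact/eqmx_sym/eqmx_scale.
rewrite (rank_pair_eqmx (eX C) (eX D)).
rewrite trmx_mul mulmxA -(mulmxA _ (DFTEb n alpha)) (EbEbT prim) -scalemxAr -scalemxAl.
rewrite (eqmx_scale _ nz).
rewrite (rank_pair_eqmx (eqmxMr (DFTP n L) (mainW cC)) (mainW cD)).
set T := _ :&: _.
have -> : Pi L (~: defset alpha C) *m DFTP n L *m (Pi L (~: defset alpha D))^T = Pi L T *m DFTP n L.
  apply/matrixP => a b; rewrite /Pi tr_diag_mx mul_mx_diag !mul_diag_mx !mxE.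
  case: eqP => [->|_]; last by rewrite !mulr0 mul0r.
  by rewrite /T !inE !mulRb ?andbT.
by rewrite mxrankMfree ?rank_Pi // row_free_unit (P_unit n L).
Qed.

Lemma dual_cyc (C : 'M[F]_n) : is_cyclic C -> is_cyclic (dualC C).
Proof.
move=> cC v; rewrite /dualC !sub_kermx cshiftE => /eqP v0.
have ShT : Sh *m Sh^T = 1%:M.
  by rewrite /Sh tr_perm_mx invgK -perm_mxM mulVg perm_mx1.
have r : \rank (C *m Sh) = \rank C.
  by rewrite mxrankMfree // row_free_unit unitmx_perm.
have CS : (C <= C *m Sh)%MS.
  have : (C *m Sh == C)%MS by case: (mxrank_leqif_eq (cyc_stab cC)) => _ <-; rewrite r.
  by case/andP.
have : (C *m Sh^T <= C)%MS.
  by apply: submx_trans (submxMr Sh^T CS) _; rewrite -mulmxA ShT mulmx1.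
case/submxP => X hX.
apply/eqP; rewrite -mulmxA -[Sh]trmxK -trmx_mul hX trmx_mul mulmxA v0 mul0mx //.
Qed.

End Cyc.


Lemma nzL (F : finFieldType) (L : fieldExtType F) n : coprime n #|F| -> (n%:R : L) != 0.
Proof.
move=> cop; rewrite -(rmorph_nat (in_alg L)) fmorph_eq0.
have [p pr pch] := finPcharP F.
rewrite -(dvdn_pcharf pch).
have pF : (p %| #|F|)%N.
  have hF : #|F| = (p ^ logn p #|F|)%N := card_pprimeChar pch.
  rewrite hF; case: (logn p #|F|) hF => [|k] hF; last by rewrite dvdn_exp.
  by have := finNzRing_gt1 F; rewrite hF.
apply/negP => pn.
by have := coprime_dvdl pn cop; rewrite prime_coprime // pF.
Qed.

Lemma eqmx_vec (K : fieldType) m1 m2 k (A : 'M[K]_(m1, k)) (B : 'M_(m2, k)) :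
  (forall v : 'rV_k, (v <= A)%MS = (v <= B)%MS) -> (A :=: B)%MS.
Proof.
move=> h; apply/eqmxP/andP; split; apply/row_subP => i.
  by rewrite -h row_sub.
by rewrite h row_sub.
Qed.

Section Sympl.
Variables (F : finFieldType) (n : nat) (C1 C2 : 'M[F]_n).
Local Notation S := (block_mx (dualC C1) 0 0 (dualC C2)).

Lemma symp_mem (v : 'rV_(n + n)) :
  (v <= sympl_dual S)%MS = (lsubmx v <= C2)%MS && (rsubmx v <= C1)%MS.
Proof.
rewrite /sympl_dual sub_kermx -[v]hsubmxK /symJ mulmxA mul_row_block.
rewrite tr_block_mx !trmx0 mul_row_block !mulmx0 !addr0 !add0r !mulmx1 ?mulmxN.
rewrite row_mx_eq0 mul_mx_scalar scale1r mulNmx oppr_eq0 andbC row_mxKl row_mxKr.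
by rewrite -!sub_kermx /dualC (dualK C1) (dualK C2).
Qed.

End Sympl.

Lemma cap_block (K : fieldType) n (X1 X2 Y1 Y2 : 'M[K]_n) :
  (block_mx X1 0 0 X2 :&: block_mx Y1 0 0 Y2 :=: block_mx (X1 :&: Y1) 0 0 (X2 :&: Y2))%MS.
Proof.
apply: eqmx_vec => v; rewrite sub_capmx !sub_blockP !sub_capmx.
by rewrite andbACA.
Qed.

Unset Implicit Arguments.

Theorem mainTheorem1 (F : finFieldType) (n : nat) (L : fieldExtType F) (alpha : L)
    (C1 C2 : 'M[F]_n) (d1 d2 : nat) :
  (0 < n)%N -> coprime n #|F| -> n.-primitive_root alpha ->
  is_cyclic C1 -> is_cyclic C2 ->
  is_min_dist C1 d1 -> is_min_dist C2 d2 ->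
  let m := #|defset alpha (dualC C1) :&: defset alpha C2| in
  exists S : 'M[F]_(n + n),
    is_quenta S (\rank C1 - m) (minn d1 d2) (n - \rank C2 - m).
Proof.
move=> n_gt0 cop prim cC1 cC2 [_ md1] [_ md2] m.
have nz := nzL L cop.
pose S := block_mx (dualC C1) 0 0 (dualC C2).
exists S.
set k1 := \rank C1; set k2 := \rank C2.
have k1n : (k1 <= n)%N by apply: rank_leq_col.
have k2n : (k2 <= n)%N by apply: rank_leq_col.
have rdual (C : 'M[F]_n) : \rank (dualC C) = (n - \rank C)%N.
  by rewrite /dualC mxrank_ker mxrank_tr.
set R := \rank (C1 *m C2^T).
have RT : \rank (C2 *m C1^T) = R by rewrite -mxrank_tr trmx_mul trmxK.
have Rk1 : (R <= k1)%N by apply: mxrankM_maxl.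
have Rk2 : (R <= k2)%N by rewrite /R -mxrank_tr trmx_mul trmxK mxrankM_maxl.
have rX1 : \rank (dualC C1 :&: C2)%MS = (k2 - R)%N.
  by rewrite capmxC /dualC rank_cap_dual RT.
have rX2 : \rank (dualC C2 :&: C1)%MS = (k1 - R)%N.
  by rewrite capmxC /dualC rank_cap_dual.
have X2le : (k1 - R <= n - k2)%N.
  by rewrite -rX2 -rdual mxrankS // capmxSl.
have mR : (m + R)%N = k1.
  set Z1 := defset alpha C1; set Z2 := defset alpha C2; set Zd := defset alpha (dualC C1).
  have cD : is_cyclic (dualC C1) := dual_cyc cC1.
  have h1 : k1 = #|~: Z1| := rank_cyc prim nz cC1.
  have hd : #|~: Zd| = (n - k1)%N by rewrite -(rank_cyc prim nz cD) rdual.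
  have h0 : #|~: Z1 :&: @negI n @^-1: (~: Zd)| = 0%N.
    rewrite -(pair_cyc prim nz cC1 cD) /dualC -[C1 in C1 *m _]trmxK -trmx_mul.
    by rewrite mulmx_ker trmx0 mxrank0.
  have e0 : ~: Z1 :&: @negI n @^-1: (~: Zd) = set0 by apply/eqP; rewrite -cards_eq0 h0.
  have sub : @negI n @^-1: (~: Z1) \subset Zd.
    apply/subsetP => x; rewrite inE => hx; apply/negPn/negP => hx'.
    have : negI x \in (set0 : {set 'I_n}).
      by rewrite -e0 in_setI hx /= inE negIK in_setC.
    by rewrite inE.
  have cardA : #|@negI n @^-1: (~: Z1)| = k1.
    by rewrite card_preimset ?h1 //; exact: negI_inj.
  have cardZd : #|Zd| = k1 by have := cardsC Zd; rewrite hd card_ord; lia.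
  have eqZd : Zd = @negI n @^-1: (~: Z1).
    by apply/eqP; rewrite eq_sym eqEcard sub cardZd cardA leqnn.
  have pair2 : R = #|~: Z2 :&: @negI n @^-1: (~: Z1)|.
    by rewrite -RT (pair_cyc prim nz cC2 cC1).
  by rewrite /m -/Zd -/Z2 eqZd pair2 (setIC (~: Z2)) -setDE cardsID cardA.
have rS : \rank S = (n - k1 + (n - k2))%N by rewrite rank_diag_block_mx !rdual.
have eqcap : (S :&: sympl_dual S :=: block_mx (dualC C1 :&: C2) 0 0 (dualC C2 :&: C1))%MS.
  apply: eqmx_vec => v; rewrite sub_capmx symp_mem !sub_blockP !sub_capmx.
  by rewrite andbACA.
split.
- rewrite rS; lia.
- rewrite eqcap rank_diag_block_mx rX1 rX2; lia.
move=> v vd vS.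
move: vd; rewrite symp_mem => /andP[aC2 bC1].
have v0 : v != 0 by apply: contraNneq vS => ->; rewrite sub0mx.
have [a0|anz] := eqVneq (lsubmx v) 0.
  have bnz : rsubmx v != 0.
    apply: contraNneq v0 => b0; rewrite -[v]hsubmxK a0 b0 row_mx0 //.
  apply: leq_trans (geq_minl _ _) _; apply: leq_trans (md1 _ bC1 bnz) _.
  rewrite /swt /wt; apply: subset_leq_card; apply/subsetP => i; rewrite !inE => ->.
  by rewrite orbT.
apply: leq_trans (geq_minr _ _) _; apply: leq_trans (md2 _ aC2 anz) _.
rewrite /swt /wt; apply: subset_leq_card; apply/subsetP => i; rewrite !inE => ->.
by [].
Qed.
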